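(* If there exists a Heffter space with $v$ points and $r$ parallel classes (over some abelian group of order $2v+1$) which is a linear space, then every prime divisor of $2v+1$ divides $r-1$.
   Context: A half-set of an abelian group $G$ of odd order $2v+1\ge7$ is a subset $V\subseteq G\setminus\{0\}$ containing exactly one element of each pair $\{g,-g\}$, $g\ne0$. A Heffter system on $V$ with block size $k$ is a partition of $V$ into blocks of size $k$, each summing to $0$ in $G$. A Heffter space over $G$ is a partial linear space (any two distinct points in at most one block) with point set a half-set $V$ of $G$, together with a resolution (partition of its blocks into parallel classes, each partitioning $V$) in which every parallel class is a Heffter system on $V$. It is a linear space if any two distinct points lie in exactly one block. *)

(* Defs.v *)
From HB Require Import structures.
From mathcomp Require Import all_boot all_order all_algebra.
Set Implicit Arguments. Unset Strict Implicit. Unset Printing Implicit Defensive.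
Import GRing.Theory.
Local Open Scope ring_scope.

Definition half_set (G : finZmodType) (V : {set G}) : Prop :=
  (0 \notin V) /\ (forall g : G, g != 0 -> ((g \in V) (+) (- g \in V)) = true).

Definition heffter_system (G : finZmodType) (V : {set G}) (k : nat)
    (S : {set {set G}}) : Prop :=
  partition S V /\
  (forall B, B \in S -> #|B| = k /\ \sum_(x in B) x = 0).

Definition blocks (G : finZmodType) (r : nat) (P : 'I_r -> {set {set G}})
  : {set {set G}} := \bigcup_(i < r) P i.

Definition heffter_space (G : finZmodType) (V : {set G}) (k r : nat)
    (P : 'I_r -> {set {set G}}) : Prop :=
  [/\ half_set V,
      (forall i j : 'I_r, i != j -> [disjoint P i & P j]),
      (forall i : 'I_r, heffter_system V k (P i)) &
      (forall x y : G, x \in V -> y \in V -> x != y ->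
         forall B1 B2, B1 \in blocks P -> B2 \in blocks P ->
           x \in B1 -> y \in B1 -> x \in B2 -> y \in B2 -> B1 = B2)].

Definition is_linear_space (G : finZmodType) (V : {set G}) (r : nat)
    (P : 'I_r -> {set {set G}}) : Prop :=
  forall x y : G, x \in V -> y \in V -> x != y ->
    exists! B, B \in blocks P /\ x \in B /\ y \in B.

(* Main.v *)
Require Import Defs.
From HB Require Import structures.
From mathcomp Require Import all_boot all_order all_algebra all_fingroup all_solvable.
From mathcomp Require Import zify.
Set Implicit Arguments. Unset Strict Implicit. Unset Printing Implicit Defensive.
Import GRing.Theory.
Local Open Scope ring_scope.

Lemma key (G : finZmodType) (V : {set G}) (k r : nat) (P : 'I_r -> {set {set G}}) x :
  heffter_space V k P -> is_linear_space V P -> x \in V ->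
  \sum_(y in V) y = x - x *+ r.
Proof.
move=> [hV disj hs pl] lin xV.
pose B i := pblock (P i) x.
have partP i : partition (P i) V by case: (hs i).
have covP i : cover (P i) = V by case/and3P: (partP i) => /eqP.
have trivP i : trivIset (P i) by case/and3P: (partP i).
have BP i : B i \in P i by apply: pblock_mem; rewrite covP.
have xB i : x \in B i by rewrite mem_pblock covP.
have BV i y : y \in B i -> y \in V.
  by move=> yB; rewrite -(covP i); apply/bigcupP; exists (B i).
have Bbl i : B i \in blocks P by apply/bigcupP; exists i.
have sumB i : \sum_(y in B i) y = 0 by case: (hs i) => _ /(_ _ (BP i)) [].
have dis : forall i j, i != j -> [disjoint B i :\ x & B j :\ x].
  move=> i j ij; apply/pred0P => y /=; apply/negP => /andP[].
  rewrite !inE => /andP[yx yBi] /andP[_ yBj].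
  have e : B i = B j by apply: (pl x y) => //; [apply: BV yBi| rewrite eq_sym].
  move: (disj i j ij) => /pred0P /(_ (B i)) /=.
  by rewrite (BP i) /= e (BP j).
have U : \bigcup_i (B i :\ x) = V :\ x.
  apply/setP => y; apply/bigcupP/idP.
    by case=> i _; rewrite !inE => /andP[-> /BV ->].
  rewrite !inE => /andP[yx yV].
  have [C [[/bigcupP[i _ CP] [xC yC]] _]] := lin x y xV yV ltac:(by rewrite eq_sym).
  exists i => //; rewrite !inE yx /=.
  by rewrite /B (def_pblock (trivP i) CP xC).
rewrite (big_setD1 x xV) /= -U partition_disjoint_bigcup //.
have -> : \sum_(i < r) \sum_(y in B i :\ x) y = \sum_(i < r) (- x).
  apply: eq_bigr => i _; move: (sumB i); rewrite (big_setD1 x (xB i)) /=.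
  by move/eqP; rewrite addrC addr_eq0 => /eqP.
by rewrite sumr_const card_ord mulNrn.
Qed.
Local Close Scope ring_scope.

Local Open Scope ring_scope.
Theorem corollary2p3 (G : finZmodType) (v r : nat) :
  #|G| = (2 * v + 1)%N -> (7 <= 2 * v + 1)%N ->
  (exists (V : {set G}) (k : nat) (P : 'I_r -> {set {set G}}),
      heffter_space V k P /\ is_linear_space V P) ->
  forall p : nat, prime p -> (p %| 2 * v + 1)%N -> (p %| r - 1)%N.
Proof.
move=> cardG le7 [V [k [P [hsp lin]]]] p pp pdv.
have [[V0 hV] _ _ _] := hsp.
have inV g : g != 0 -> g \in V \/ - g \in V.
  move=> /hV; case: (g \in V); case: (- g \in V) => //= _; by [left | right].
have [g gnz] : exists g : G, g != 0.
  apply/existsP; rewrite -negb_forall; apply/negP => /forallP h.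
  have : (#|G| <= #|[set (0%R : G)]|)%N.
    by apply: subset_leq_card; apply/subsetP => z _; rewrite inE h.
  by rewrite cards1 cardG; lia.
have [x xV] : exists x, x \in V.
  by case: (inV g gnz) => h; [exists g | exists (- g)].
have xnz : x != 0 by apply: contraNneq V0 => <-.
have [h hn] : exists h : G, h \notin [set 0%R; x; - x].
  apply/existsP; rewrite -negb_forall; apply/negP => /forallP hh.
  have : (#|G| <= #|[set 0%R; x; - x]|)%N.
    by apply: subset_leq_card; apply/subsetP => z _; apply: hh.
  have : (#|[set (0%R:G); x; - x]| <= 3)%N.
    apply: leq_trans (leq_card_setU _ _) _; rewrite cards1 addn1 ltnS.
    by apply: leq_trans (leq_card_setU _ _) _; rewrite !cards1.
  move=> a b; move: (leq_trans b a); rewrite cardG; lia.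
move: hn; rewrite !inE => /norP[/norP[hnz hx] hmx].
have [y [yV yx]] : exists y, y \in V /\ y != x.
  case: (inV h hnz) => hV'; first by exists h.
  exists (- h); split => //.
  by apply: contraNneq hmx => <-; rewrite opprK.
have kx := key hsp lin xV; have ky := key hsp lin yV.
pose phi (z : G) := z *+ r - z.
have phiN z : phi (- z) = - phi z by rewrite /phi mulNrn opprD.
have phiV z : z \in V -> phi z = - \sum_(w in V) w.
  by move=> zV; rewrite (key hsp lin zV) opprB.
have phid : phi (x - y) = 0.
  have phiB a b : phi (a - b) = phi a - phi b by rewrite /phi mulrnBl !opprD addrACA.
  by rewrite phiB !phiV // subrr.
have S0 : \sum_(w in V) w = 0.
  have dnz : x - y != 0 by rewrite subr_eq0 eq_sym.
  apply/eqP; rewrite -oppr_eq0; apply/eqP.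
  case: (inV _ dnz) => dV; first by rewrite -(phiV _ dV) phid.
  by rewrite -(phiV _ dV) phiN phid oppr0.
have phi0 z : phi z = 0.
  have [->|znz] := eqVneq z 0; first by rewrite /phi mul0rn subrr.
  case: (inV z znz) => zV; first by rewrite phiV // S0 oppr0.
  by rewrite -[z]opprK phiN phiV // S0 !oppr0.
have rpos : (0 < r)%N.
  rewrite lt0n; apply/negP => /eqP r0.
  by move: (phi0 x); rewrite /phi r0 mulr0n sub0r => /eqP; rewrite oppr_eq0 (negbTE xnz).
have kill (z : G) : z *+ (r - 1)%N = 0.
  by move: (phi0 z); rewrite /phi -(prednK rpos) mulrSr addrK subn1.
have [z _ oz] := @Cauchy _ p [set: G] pp ltac:(by rewrite cardsT cardG).
by rewrite -oz order_dvdn FinRing.Theory.zmodXgE kill.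
Qed.
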